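(* Let $\mathbf L\in\mathbb R_+^{n\times k}$ and let $\boldsymbol\psi:\mathcal C\to\mathbb R_+^n$ be $\mathbf L$-calibrated. Then for every sequence $\{\mathbf z_m\}$ of points in $\mathcal S_\psi$ there exists $t\in[k]$ such that $\mathcal N^\psi(\{\mathbf z_m\})\subseteq\mathcal Q^{\mathbf L}_t$.
   Context: Notation: $[m]=\{1,\dots,m\}$; $\Delta_n=\{\mathbf p\in\mathbb R_+^n:\sum_i p_i=1\}$. A loss matrix $\mathbf L\in\mathbb R_+^{n\times k}$ has columns $\boldsymbol\ell_t$, $t\in[k]$. Standing assumption: for each $t\in[k]$ there is $\mathbf p\in\Delta_n$ with $\operatorname{argmin}_{t'}\mathbf p^\top\boldsymbol\ell_{t'}=\{t\}$. A surrogate loss is $\boldsymbol\psi:\mathcal C\to\mathbb R_+^n$ with $\mathcal C\subseteq\mathbb R^d$ convex; $\mathcal R_\psi=\boldsymbol\psi(\mathcal C)$, $\mathcal S_\psi=\operatorname{conv}(\mathcal R_\psi)$. $\boldsymbol\psi$ is $\mathbf L$-calibrated if there is $\mathrm{pred}:\mathcal C\to[k]$ such that for all $\mathbf p\in\Delta_n$: $\inf_{\mathbf u\in\mathcal C:\mathrm{pred}(\mathbf u)\notin\operatorname{argmin}_t\mathbf p^\top\boldsymbol\ell_t}\mathbf p^\top\boldsymbol\psi(\mathbf u)>\inf_{\mathbf u\in\mathcal C}\mathbf p^\top\boldsymbol\psi(\mathbf u)$. Trigger probability set: $\mathcal Q^{\mathbf L}_t=\{\mathbf p\in\Delta_n: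 t\in\operatorname{argmin}_{t'\in[k]}\mathbf p^\top\boldsymbol\ell_{t'}\}$. Positive normal set at a sequence $\{\mathbf z_m\}$ in $\mathcal S_\psi$: $\mathcal N^\psi(\{\mathbf z_m\})=\{\mathbf p\in\Delta_n:\lim_{m\to\infty}\mathbf p^\top\mathbf z_m\text{ exists and equals }\inf_{\mathbf z'\in\mathcal S_\psi}\mathbf p^\top\mathbf z'\}$. *)

(* Defs.v *)
From Stdlib Require Import Reals List.
Import ListNotations.
Open Scope R_scope.

(* Vectors of R^n are modelled as functions nat -> R; only indices < n are
   meaningful (vectors of R^n are required to vanish at indices >= n where a
   canonical representative is needed). *)
Definition vec := nat -> R.

Fixpoint dot (n : nat) (p z : vec) : R :=
  match n with
  | O => 0
  | S m => dot m p z + p m * z m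
  end.

Definition in_Rn_plus (n : nat) (z : vec) : Prop :=
  (forall i, (i < n)%nat -> 0 <= z i) /\ (forall i, (n <= i)%nat -> z i = 0).

Definition simplex (n : nat) (p : vec) : Prop :=
  in_Rn_plus n p /\ dot n p (fun _ => 1) = 1.

Definition convex_set (d : nat) (C : vec -> Prop) : Prop :=
  (forall u, C u -> forall i, (d <= i)%nat -> u i = 0) /\
  (forall u v (lam : R), C u -> C v -> 0 <= lam <= 1 ->
     C (fun i => lam * u i + (1 - lam) * v i)).

Definition is_inf (A : R -> Prop) (m : R) : Prop :=
  (forall a, A a -> m <= a) /\ (forall b, (forall a, A a -> b <= a) -> b <= m).

Definition range_psi (C : vec -> Prop) (psi : vec -> vec) (z : vec) : Prop :=
  exists u, C u /\ z = psi u.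

Definition conv (A : vec -> Prop) (z : vec) : Prop :=
  exists l : list (R * vec),
    (forall wx, In wx l -> 0 <= fst wx /\ A (snd wx)) /\
    fold_right (fun wx s => fst wx + s) 0 l = 1 /\
    (forall i, z i = fold_right (fun wx s => fst wx * snd wx i + s) 0 l).

Definition S_psi (C : vec -> Prop) (psi : vec -> vec) : vec -> Prop :=
  conv (range_psi C psi).

Definition col (L : nat -> nat -> R) (t : nat) : vec := fun i => L i t.

(* t in argmin_{t' in [k]} p^T l_t' (indices of [k] are 0..k-1). *)
Definition in_argmin (n k : nat) (L : nat -> nat -> R) (p : vec) (t : nat) : Prop :=
  (t < k)%nat /\ forall t', (t' < k)%nat -> dot n p (col L t) <= dot n p (col L t').

Definition loss_matrix (n k : nat) (L : nat -> nat -> R) : Prop :=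
  (forall i t, (i < n)%nat -> (t < k)%nat -> 0 <= L i t) /\
  (forall t, (t < k)%nat -> exists p, simplex n p /\
      forall t', in_argmin n k L p t' <-> t' = t).

(* psi is L-calibrated: there is pred : C -> [k] such that for all p in Delta_n,
   inf_{u in C, pred u notin argmin} p.psi(u) > inf_{u in C} p.psi(u)
   (an infimum over the empty set being +infinity). *)
Definition calibrated (n k : nat) (L : nat -> nat -> R)
    (C : vec -> Prop) (psi : vec -> vec) : Prop :=
  exists pred : vec -> nat,
    (forall u, C u -> (pred u < k)%nat) /\
    forall p, simplex n p ->
      exists m, is_inf (fun a => exists u, C u /\ a = dot n p (psi u)) m /\
        ((forall u, C u -> in_argmin n k L p (pred u)) \/
         exists mA, is_inf (fun a => exists u, C u /\ ~ in_argmin n k L p (pred u)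
                                        /\ a = dot n p (psi u)) mA /\ m < mA).

Definition trigger (n k : nat) (L : nat -> nat -> R) (t : nat) (p : vec) : Prop :=
  simplex n p /\ in_argmin n k L p t.

Definition pos_normal (n : nat) (C : vec -> Prop) (psi : vec -> vec)
    (z : nat -> vec) (p : vec) : Prop :=
  simplex n p /\
  exists l, Un_cv (fun m => dot n p (z m)) l /\
    is_inf (fun a => exists z', S_psi C psi z' /\ a = dot n p z') l.

(* Main.v *)
Require Import Defs.
From Stdlib Require Import Reals List Lra Lia Classical ClassicalEpsilon.
Open Scope R_scope.

Definition sumw (l : list (R * vec)) : R := fold_right (fun wx s => fst wx + s) 0 l.

Definition Wq (Q : vec -> Prop) (l : list (R * vec)) : R :=
  fold_right (fun wx s => (if excluded_middle_informative (Q (snd wx)) then fst wx else 0) + s) 0 l.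

Fixpoint sumk (k : nat) (f : nat -> R) : R :=
  match k with O => 0 | S j => sumk j f + f j end.

Lemma sumk_add k f g : sumk k (fun t => f t + g t) = sumk k f + sumk k g.
Proof. induction k; simpl; [lra | rewrite IHk; lra]. Qed.

Lemma sumk_nonneg k f : (forall t, (t < k)%nat -> 0 <= f t) -> 0 <= sumk k f.
Proof. induction k; simpl; intros H; [lra|].
  assert (0 <= f k) by (apply H; lia).
  assert (0 <= sumk k f) by (apply IHk; intros; apply H; lia). lra. Qed.

Lemma sumk_ge k f t0 : (forall t, (t < k)%nat -> 0 <= f t) -> (t0 < k)%nat -> f t0 <= sumk k f.
Proof. induction k; simpl; intros H Ht; [lia|].
  destruct (Nat.eq_dec t0 k) as [->|ne].
  - assert (0 <= sumk k f) by (apply sumk_nonneg; intros; apply H; lia). lra.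
  - assert (f t0 <= sumk k f) by (apply IHk; [intros; apply H; lia | lia]).
    assert (0 <= f k) by (apply H; lia). lra. Qed.

Lemma sumk_lt k f c : (forall t, (t < k)%nat -> f t < c) -> (0 < k)%nat -> sumk k f < INR k * c.
Proof. induction k; simpl; intros H Hk; [lia|].
  destruct k.
  - simpl. assert (f 0%nat < c) by (apply H; lia). simpl. lra.
  - assert (sumk (S k) f < INR (S k) * c) by (apply IHk; [intros; apply H; lia| lia]).
    assert (f (S k) < c) by (apply H; lia).
    change (sumk (S k) f + f (S k) < INR (S (S k)) * c).
    rewrite (S_INR (S k)). lra. Qed.

Lemma Wq_ind Q a l : Wq Q (a :: l) =
  (if excluded_middle_informative (Q (snd a)) then fst a else 0) + Wq Q l.
Proof. reflexivity. Qed.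

Lemma pigeon k (P : nat -> vec -> Prop) l :
  (forall wx, In wx l -> 0 <= fst wx /\ exists t, (t < k)%nat /\ P t (snd wx)) ->
  sumw l = 1 ->
  exists t, (t < k)%nat /\ / INR k <= Wq (P t) l.
Proof.
  intros Hl Hs.
  assert (Hsum : sumw l <= sumk k (fun t => Wq (P t) l)).
  { clear Hs. induction l as [|a l IH]; simpl.
    - assert (0 <= sumk k (fun _ => 0)) by (apply sumk_nonneg; intros; lra). lra.
    - rewrite (sumk_add k (fun t => if excluded_middle_informative (P t (snd a)) then fst a else 0)
        (fun t => Wq (P t) l)).
      destruct (Hl a (or_introl eq_refl)) as [ha [t0 [ht0 hp]]].
      assert (fst a <= sumk k (fun t => if excluded_middle_informative (P t (snd a)) then fst a else 0)).
      { eapply Rle_trans; [| apply (sumk_ge _ _ t0)].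
        - cbv beta; destruct (excluded_middle_informative (P t0 (snd a))); [lra | contradiction].
        - intros; destruct excluded_middle_informative; lra.
        - exact ht0. }
      assert (sumw l <= sumk k (fun t => Wq (P t) l)).
      { apply IH. intros; apply Hl; right; auto. }
      unfold sumw in *; simpl. lra. }
  apply NNPP; intro Hn.
  destruct k as [|k'].
  - simpl in Hsum. lra.
  - assert (sumk (S k') (fun t => Wq (P t) l) < INR (S k') * / INR (S k')).
    { apply sumk_lt; [|lia]. intros t ht.
      apply Rnot_le_lt. intro Hc. apply Hn. exists t. split; auto. }
    rewrite Rinv_r in H by (apply not_0_INR; lia). lra.
Qed.

Lemma Wq_pos Q l : 0 < Wq Q l -> exists wx, In wx l /\ Q (snd wx).
Proof.
  induction l as [|a l IH]; simpl; intros H; [lra|].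
  destruct (excluded_middle_informative (Q (snd a))) as [q|q].
  - exists a; auto.
  - destruct IH as [wx [h1 h2]]; [lra|]. exists wx; auto.
Qed.

Lemma lb (f : vec -> R) (Q : vec -> Prop) l mp mA :
  (forall wx, In wx l -> 0 <= fst wx /\ mp <= f (snd wx) /\ (Q (snd wx) -> mA <= f (snd wx))) ->
  mp <= mA ->
  mp * sumw l + (mA - mp) * Wq Q l <= fold_right (fun wx s => fst wx * f (snd wx) + s) 0 l.
Proof.
  induction l as [|a l IH]; intros H Hm; unfold sumw, Wq in *; simpl; [lra|].
  destruct (H a (or_introl eq_refl)) as [h1 [h2 h3]].
  assert (IH' := IH (fun wx h => H wx (or_intror h)) Hm).
  destruct (excluded_middle_informative (Q (snd a))) as [q|q].
  - specialize (h3 q). nra.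
  - nra.
Qed.

Lemma dot_ext n p x y : (forall i, x i = y i) -> dot n p x = dot n p y.
Proof. intros H; induction n; simpl; [auto| rewrite IHn, H; auto]. Qed.

Lemma dot_lin n p a x g : dot n p (fun i => a * x i + g i) = a * dot n p x + dot n p g.
Proof. induction n; simpl; [lra| rewrite IHn; lra]. Qed.

Lemma dot_zero n p : dot n p (fun _ => 0) = 0.
Proof. induction n; simpl; [lra| rewrite IHn; lra]. Qed.

Lemma dot_fold n p l :
  dot n p (fun i => fold_right (fun wx s => fst wx * snd wx i + s) 0 l) =
  fold_right (fun wx s => fst wx * dot n p (snd wx) + s) 0 l.
Proof.
  induction l as [|a l IH]; simpl.
  - apply dot_zero.
  - rewrite (dot_lin n p (fst a) (snd a)). rewrite IH. reflexivity.
Qed.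

Lemma bound_max (k : nat) (Q : nat -> nat -> Prop) :
  (forall t, (t < k)%nat -> exists M, forall m, (M <= m)%nat -> Q t m) ->
  exists M, forall t, (t < k)%nat -> forall m, (M <= m)%nat -> Q t m.
Proof.
  induction k; intros H.
  - exists 0%nat; intros; lia.
  - destruct IHk as [M1 H1]. { intros; apply H; lia. }
    destruct (H k (Nat.lt_succ_diag_r k)) as [M2 H2].
    exists (Nat.max M1 M2). intros t ht m hm.
    destruct (Nat.eq_dec t k) as [->|ne].
    + apply H2; lia.
    + apply H1; lia.
Qed.

Theorem mainTheorem4 (n k d : nat) (L : nat -> nat -> R)
    (C : vec -> Prop) (psi : vec -> vec)
    (hL : loss_matrix n k L)
    (hC : convex_set d C)
    (hpsi : forall u, C u -> in_Rn_plus n (psi u))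
    (hcal : calibrated n k L C psi)
    (z : nat -> vec) (hz : forall m, S_psi C psi (z m)) :
  exists t, (t < k)%nat /\
    forall p, pos_normal n C psi z p -> trigger n k L t p.
Proof.
  destruct hcal as [pred [hpk hcal]].
  set (Pt := fun t (x : vec) => exists u, C u /\ x = psi u /\ pred u = t).
  set (rep := fun (x : vec) (l : list (R * vec)) =>
    (forall wx, In wx l -> 0 <= fst wx /\ range_psi C psi (snd wx)) /\
    sumw l = 1 /\ (forall i, x i = fold_right (fun wx s => fst wx * snd wx i + s) 0 l)).
  set (P := fun m t => exists l, rep (z m) l /\ / INR k <= Wq (Pt t) l).
  assert (hP : forall m, exists t, (t < k)%nat /\ P m t).
  { intro m. destruct (hz m) as [l [h1 [h2 h3]]].
    destruct (pigeon k Pt l) as [t [ht hw]].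
    - intros wx hin. destruct (h1 wx hin) as [a [u [hu e]]]. split; auto.
      exists (pred u). split; auto. exists u; auto.
    - exact h2.
    - exists t. split; auto. exists l. split; auto. split; auto. }
  assert (hinf : exists t, (t < k)%nat /\ forall M, exists m, (M <= m)%nat /\ P m t).
  { apply NNPP; intro Hn.
    destruct (bound_max k (fun t m => ~ P m t)) as [M HM].
    - intros t ht. apply NNPP; intro Hn2. apply Hn. exists t. split; auto.
      intro M. apply NNPP; intro Hn3. apply Hn2. exists M. intros m hm hp.
      apply Hn3. exists m; auto.
    - destruct (hP M) as [t [ht hp]]. apply (HM t ht M (le_n _) hp). }
  destruct hinf as [t [htk hinf]].
  exists t. split; auto.
  intros p [hsp [lim [hcv hinfS]]].
  split; auto.
  destruct (classic (in_argmin n k L p t)) as [ok|bad]; auto. exfalso.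
  assert (hk : 0 < INR k) by (apply lt_0_INR; lia).
  assert (hik : 0 < / INR k) by (apply Rinv_0_lt_compat; auto).
  destruct (hcal p hsp) as [mp [hmp [hall | [mA [hmA hlt]]]]].
  - destruct (hinf 0%nat) as [m [_ [l [_ hw]]]].
    destruct (Wq_pos (Pt t) l) as [wx [_ [u [hu [_ hpu]]]]]; [lra|].
    apply bad. rewrite <- hpu. apply hall; auto.
  - assert (hlimp : lim <= mp).
    { apply (proj2 hmp). intros a [u [hu ->]].
      apply (proj1 hinfS). exists (psi u). split; auto.
      exists ((1, psi u) :: nil). simpl. split; [|split].
      - intros wx [<-|[]]. simpl. split; [lra|]. exists u; auto.
      - lra.
      - intros i; lra. }
    set (eps := (mA - mp) / INR k).
    assert (heps : 0 < eps) by (unfold eps; apply Rdiv_lt_0_compat; lra).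
    destruct (hcv eps heps) as [N HN].
    destruct (hinf N) as [m [hm [l [[h1 [h2 h3]] hw]]]].
    specialize (HN m ltac:(lia)).
    assert (hd : dot n p (z m) =
       fold_right (fun wx s => fst wx * dot n p (snd wx) + s) 0 l).
    { rewrite (dot_ext n p (z m) _ h3). apply dot_fold. }
    assert (hlb := lb (dot n p) (Pt t) l mp mA).
    assert (Hge : mp * sumw l + (mA - mp) * Wq (Pt t) l <=
       fold_right (fun wx s => fst wx * dot n p (snd wx) + s) 0 l).
    { apply hlb; [|lra]. intros wx hin. destruct (h1 wx hin) as [ha [u [hu e]]].
      split; auto. split.
      - rewrite e. apply (proj1 hmp). exists u; auto.
      - intros [u' [hu' [e' hp']]]. rewrite e'. apply (proj1 hmA). exists u'.
        split; auto. split; auto. rewrite hp'. auto. }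
    rewrite h2, <- hd in Hge.
    assert (eps <= (mA - mp) * Wq (Pt t) l).
    { unfold eps, Rdiv. apply Rmult_le_compat_l; lra. }
    unfold R_dist in HN. apply Rabs_def2 in HN. lra.
Qed.
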